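(* Consider the setting and Algorithm DRDGA described in the context, under Assumptions A1 and A2. Suppose the stepsize sequence $\{\beta[t]\}_{t>0}$ is positive, non-increasing and satisfies $\lim_{t\to\infty}\beta[t]=0$. Then there is a positive constant $D$ such that for all $i=1,\dots,m$, $$\sup_{t}\|\lambda_i[t]\|\le D.$$
   Context: Problem: $m$ agents; agent $i$ has a function $f_i:\mathbb{R}^{n_i}\to\mathbb{R}$, a set $\mathbf{X}_i\subseteq\mathbb{R}^{n_i}$, a matrix $A_i\in\mathbb{R}^{p\times n_i}$ and a vector $\mathbf{b}_i\in\mathbb{R}^p$. The problem is $\min_{\mathbf{x}_i\in\mathbf{X}_i,\,i=1,\dots,m} F(\mathbf{x}):=\sum_{i=1}^m f_i(\mathbf{x}_i)$ subject to $\sum_{i=1}^m (A_i\mathbf{x}_i-\mathbf{b}_i)=0$, where $\mathbf{x}=(\mathbf{x}_1,\dots,\mathbf{x}_m)$. Regularization parameters $\gamma_i>0$ are fixed; $\mathcal{L}_i(\mathbf{x}_i,\lambda)=f_i(\mathbf{x}_i)+\lambda^\top(A_i\mathbf{x}_i-\mathbf{b}_i)-\frac{\gamma_i}{2}\lambda^\top\lambda$ for $\lambda\in\mathbb{R}^p$. Assumption A1: each $f_i$ is $\tau_i$-strongly convex ($\tau_i>0$), and each $\mathbf{X}_i$ is nonempty, convex and compact. (Consequently there are constants $G_i>0$ with $\|A_i\mathbf{x}_i-\mathbf{b}_i\|\le G_i$ for all $\mathbf{x}_i\in\mathbf{X}_i$.) Network: a sequence of directed graphs $\mathcal{G}[t]=(\{1,\dots,m\},\mathcal{E}[t])$.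 Out-neighbors $\mathcal{N}_i^{out}[t]=\{j:(i,j)\in\mathcal{E}[t]\}\cup\{i\}$, in-neighbors $\mathcal{N}_i^{in}[t]=\{j:(j,i)\in\mathcal{E}[t]\}\cup\{i\}$, out-degree $d_i[t]=|\mathcal{N}_i^{out}[t]|$. Weight matrix $W[t]$: $(W[t])_{ij}=1/d_j[t]$ if $j\in\mathcal{N}_i^{in}[t]$ and $0$ otherwise (so $W[t]$ is column stochastic). Assumption A2: each agent $i$ knows $d_i[t]$ for every $t$, and there is an integer $B_c>0$ such that for every $k\ge0$ the graph with vertex set $\{1,\dots,m\}$ and edge set $\bigcup_{l=kB_c}^{(k+1)B_c-1}\mathcal{E}[l]$ is strongly connected. Algorithm DRDGA: initialize $\theta_i[0]\in\mathbb{R}^p$ arbitrary and $\rho_i[0]=1$ for all $i$. For $t=0,1,2,\dots$ and each $i$: $\mathbf{u}_i[t+1]=\sum_{j=1}^m (W[t])_{ij}\theta_j[t]$; $\rho_i[t+1]=\sum_{j=1}^m (W[t])_{ij}\rho_j[t]$; $\lambda_i[t+1]=\mathbf{u}_i[t+1]/\rho_i[t+1]$; $\mathbf{x}_i[t+1]=\arg\min_{\mathbf{x}_i\in\mathbf{X}_i}\mathcal{L}_i(\mathbf{x}_i,\lambda_i[t+1])$; $\theta_i[t+1]=\mathbf{u}_i[t+1]+\beta[t+1]\big(A_i\mathbf{x}_i[t+1]-\mathbf{b}_i-\gamma_i\lambda_i[t+1]\big)$, where $\beta[t]>0$ are stepsizes. *)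

(* Defs.v *)
From mathcomp Require Import all_boot.
From Stdlib Require Import Reals.
Set Implicit Arguments. Unset Strict Implicit. Unset Printing Implicit Defensive.

Local Open Scope R_scope.

Definition vec (n : nat) := 'I_n -> R.

Definition vsum (n : nat) (F : 'I_n -> R) : R := \big[Rplus/0%R]_(k < n) F k.
Definition dot (n : nat) (u v : vec n) : R := vsum (fun k => u k * v k).
Definition vnorm (n : nat) (u : vec n) : R := sqrt (dot u u).
Definition vadd (n : nat) (u v : vec n) : vec n := fun k => u k + v k.
Definition vsub (n : nat) (u v : vec n) : vec n := fun k => u k - v k.
Definition vscale (n : nat) (a : R) (u : vec n) : vec n := fun k => a * u k.
Definition matvec (p n : nat) (A : 'I_p -> 'I_n -> R) (x : vec n) : vec p :=
  fun r => vsum (fun c => A r c * x c).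

Definition strongly_convex (n : nat) (tau : R) (f : vec n -> R) : Prop :=
  forall (x y : vec n) (a : R), 0 <= a <= 1 ->
    f (vadd (vscale a x) (vscale (1 - a) y))
      <= a * f x + (1 - a) * f y - tau / 2 * a * (1 - a) * (vnorm (vsub x y))^2.

Definition nonempty_set (n : nat) (X : vec n -> Prop) : Prop := exists x, X x.

Definition convex_set (n : nat) (X : vec n -> Prop) : Prop :=
  forall (x y : vec n) (a : R), X x -> X y -> 0 <= a <= 1 ->
    X (vadd (vscale a x) (vscale (1 - a) y)).

Definition open_set (n : nat) (U : vec n -> Prop) : Prop :=
  forall x, U x -> exists eps, 0 < eps /\ forall y, vnorm (vsub y x) < eps -> U y.

Definition compact_set (n : nat) (X : vec n -> Prop) : Prop :=
  forall (I : Type) (U : I -> vec n -> Prop),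
    (forall i, open_set (U i)) ->
    (forall x, X x -> exists i, U i x) ->
    exists l : list I, forall x, X x -> exists i, List.In i l /\ U i x.

Definition lagr (n p : nat) (f : vec n -> R) (A : 'I_p -> 'I_n -> R) (b : vec p)
    (gamma : R) (x : vec n) (lam : vec p) : R :=
  f x + dot lam (vsub (matvec A x) b) - gamma / 2 * dot lam lam.

Definition is_argmin (n : nat) (X : vec n -> Prop) (L : vec n -> R) (x : vec n) : Prop :=
  X x /\ forall y, X y -> L x <= L y.

(* Time-varying digraph: E t i j = true iff (i,j) \in E[t]. *)
Definition out_nbrs (m : nat) (E : nat -> 'I_m -> 'I_m -> bool) (t : nat) (i : 'I_m)
  : {set 'I_m} := [set j | E t i j || (j == i)].
Definition in_nbrs (m : nat) (E : nat -> 'I_m -> 'I_m -> bool) (t : nat) (i : 'I_m)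
  : {set 'I_m} := [set j | E t j i || (j == i)].
Definition outdeg (m : nat) (E : nat -> 'I_m -> 'I_m -> bool) (t : nat) (i : 'I_m) : nat :=
  #|out_nbrs E t i|.

Definition W (m : nat) (E : nat -> 'I_m -> 'I_m -> bool) (t : nat) (i j : 'I_m) : R :=
  if j \in in_nbrs E t i then / INR (outdeg E t j) else 0.

Definition window_rel (m : nat) (E : nat -> 'I_m -> 'I_m -> bool) (B k : nat) : rel 'I_m :=
  fun a b => [exists l : 'I_B, E (k * B + l)%nat a b].

Definition strongly_connected (m : nat) (r : rel 'I_m) : Prop :=
  forall a b : 'I_m, connect r a b.

(* Main.v *)
Require Import Defs.
From HB Require Import structures.
From mathcomp Require Import all_boot.
From Stdlib Require Import Reals Lra Lia.
From mathcomp Require Import zify.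
Set Implicit Arguments. Unset Strict Implicit.
Local Open Scope R_scope.

HB.instance Definition _ := Monoid.isComLaw.Build R 0 Rplus (fun a b c => esym (Rplus_assoc a b c)) Rplus_comm Rplus_0_l.

Set Warnings "-notation-overridden,-redundant-canonical-projection".
Lemma bsum_le (I : Type) (r : seq I) (P : pred I) (F G : I -> R) :
  (forall i, P i -> F i <= G i) ->
  \big[Rplus/0]_(i <- r | P i) F i <= \big[Rplus/0]_(i <- r | P i) G i.
Proof. move=> H; apply: (big_ind2 (fun a b => a <= b)); [lra| move=> *; lra| exact: H]. Qed.

Lemma bsum_ge0 (I : Type) (r : seq I) (P : pred I) (F : I -> R) :
  (forall i, P i -> 0 <= F i) -> 0 <= \big[Rplus/0]_(i <- r | P i) F i.
Proof. move=> H; apply: (big_ind (fun a => 0 <= a)); [lra| move=> *; lra| exact: H]. Qed.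

Lemma bsum_abs (I : Type) (r : seq I) (P : pred I) (F : I -> R) :
  Rabs (\big[Rplus/0]_(i <- r | P i) F i) <= \big[Rplus/0]_(i <- r | P i) Rabs (F i).
Proof.
apply: (big_rec2 (fun a b => Rabs a <= b)); first by rewrite Rabs_R0; lra.
move=> i a b _ H; apply: Rle_trans (Rabs_triang _ _) _; lra.
Qed.

Lemma bsum_scale (I : Type) (r : seq I) (P : pred I) (F : I -> R) c :
  \big[Rplus/0]_(i <- r | P i) (c * F i) = c * \big[Rplus/0]_(i <- r | P i) F i.
Proof.
apply: (big_rec2 (fun a b => a = c * b)); first by ring.
move=> i a b _ ->; ring.
Qed.

Lemma bsum_const (n : nat) c : \big[Rplus/0]_(i < n) c = INR n * c.
Proof.
elim: n => [|n IH]; first by rewrite big_ord0 /=; ring.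
rewrite big_ord_recr IH S_INR /=; ring.
Qed.

Lemma bsum_term (T : finType) (F : T -> R) j :
  (forall i, 0 <= F i) -> F j <= \big[Rplus/0]_(i : T) F i.
Proof.
move=> H; rewrite (bigD1 j) //=.
have := @bsum_ge0 _ (index_enum T) (fun i => i != j) F (fun i _ => H i); lra.
Qed.
Section Weights.
Variables (m : nat) (E : nat -> 'I_m -> 'I_m -> bool).

Lemma outdeg_pos t j : (0 < outdeg E t j)%nat.
Proof. apply/card_gt0P; exists j; by rewrite /out_nbrs inE eqxx orbT. Qed.

Lemma outdeg_le t j : (outdeg E t j <= m)%nat.
Proof. rewrite /outdeg; apply: leq_trans (max_card _) _; by rewrite card_ord. Qed.

Lemma INR_outdeg_pos t j : 0 < INR (outdeg E t j).
Proof. apply: lt_0_INR; apply/ltP; exact: outdeg_pos. Qed.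

Lemma W_ge0 t i j : 0 <= W E t i j.
Proof.
rewrite /W; case: ifP => _; last lra.
apply: Rlt_le; apply: Rinv_0_lt_compat; exact: INR_outdeg_pos.
Qed.

Lemma W_lb t i j : j \in in_nbrs E t i -> / INR m <= W E t i j.
Proof.
move=> H; rewrite /W H; apply: Rinv_le_contravar; first exact: INR_outdeg_pos.
apply: le_INR; apply/leP; exact: outdeg_le.
Qed.

Lemma iter_Rplus k c : iter k (Rplus c) 0 = INR k * c.
Proof. elim: k => [|k IH]; first by rewrite /=; ring. rewrite iterS IH S_INR; ring. Qed.

Lemma W_colsum t j : \big[Rplus/0]_(i : 'I_m) W E t i j = 1.
Proof.
rewrite /W -big_mkcond /= big_const iter_Rplus.
have -> : #|[pred i | j \in in_nbrs E t i]| = outdeg E t j.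
  rewrite /outdeg; apply: eq_card => i; by rewrite !inE [i == j]eq_sym.
apply: Rinv_r; apply: Rgt_not_eq; exact: INR_outdeg_pos.
Qed.
End Weights.
Lemma seq_bound (T : eqType) (s : seq T) (F : T -> R) :
  exists C, 0 <= C /\ forall i, i \in s -> F i <= C.
Proof.
elim: s => [|a s [C [C0 HC]]]; first by exists 0; split; [lra|].
exists (Rmax C (F a)); split; first by apply: Rle_trans C0 (Rmax_l _ _).
move=> i; rewrite in_cons => /orP [/eqP ->|Hi]; first exact: Rmax_r.
apply: Rle_trans (Rmax_l _ _); exact: HC.
Qed.

Lemma fin_bound (T : finType) (F : T -> R) :
  exists C, 0 <= C /\ forall i, F i <= C.
Proof.
have [C [C0 HC]] := seq_bound (enum T) F.
exists C; split => // i; apply: HC; by rewrite mem_enum.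
Qed.

Lemma list_bound (l : list nat) :
  exists C, forall i, List.In i l -> INR i <= C.
Proof.
elim: l => [|a l [C HC]]; first by exists 0.
exists (Rmax C (INR a)) => i /= [->|Hi]; first exact: Rmax_r.
apply: Rle_trans (Rmax_l _ _); exact: HC.
Qed.

Lemma nat_bound (N : nat) (P : nat -> R -> Prop) :
  (forall t C C', C <= C' -> P t C -> P t C') ->
  (forall t, exists C, P t C) ->
  exists C, 0 <= C /\ forall t, (t <= N)%nat -> P t C.
Proof.
move=> Hmon Hex; elim: N => [|N [C [C0 HC]]].
  have [C HC] := Hex 0%nat; exists (Rmax 0 C); split; first exact: Rmax_l.
  by move=> t; rewrite leqn0 => /eqP ->; apply: Hmon (Rmax_r _ _) HC.
have [C1 HC1] := Hex N.+1.
exists (Rmax C C1); split; first by apply: Rle_trans C0 (Rmax_l _ _).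
move=> t; rewrite leq_eqVlt => /orP [/eqP ->|Ht].
  apply: Hmon (Rmax_r _ _) HC1.
apply: Hmon (Rmax_l _ _) _; exact: HC.
Qed.

Lemma seq_argmax (T : eqType) (F : T -> R) (i0 : T) (s : seq T) :
  exists j, forall i, i \in s -> F i <= F j.
Proof.
elim: s => [|a s [j Hj]]; first by exists i0.
case: (Rle_dec (F a) (F j)) => H.
  exists j => i; rewrite in_cons => /orP [/eqP ->|Hi] //; exact: Hj.
exists a => i; rewrite in_cons => /orP [/eqP ->|Hi]; first lra.
have := Hj i Hi; lra.
Qed.

Lemma fin_argmax (T : finType) (F : T -> R) (i0 : T) : exists j, forall i, F i <= F j.
Proof.
have [j Hj] := seq_argmax F i0 (enum T); exists j => i; apply: Hj; by rewrite mem_enum.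
Qed.

Lemma pow_dec (c : R) (a b : nat) : 0 <= c <= 1 -> (a <= b)%nat -> c ^ b <= c ^ a.
Proof.
move=> Hc Hab; have -> : b = (a + (b - a))%nat by lia.
rewrite pow_add; have : 0 <= c ^ a by apply: pow_le; lra.
have : c ^ (b - a) <= 1.
  elim: (b - a)%nat => [|k IH] /=; first lra.
  have : 0 <= c ^ k by apply: pow_le; lra. nra.
nra.
Qed.

Lemma cut_edge (T : finType) (r : rel T) (S : {set T}) a c :
  connect r a c -> a \in S -> c \notin S ->
  exists a' c', [/\ a' \in S, c' \notin S & r a' c'].
Proof.
move=> /connectP [q Hp ->] {c}; elim: q a Hp => [|y q IH] a /=.
  by move=> _ ->.
move=> /andP [Hay Hp] Ha Hl.
case Hy: (y \in S); first exact: IH Hp Hy Hl.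
by exists a, y; rewrite Hy.
Qed.

Section Rho.
Variables (m : nat) (E : nat -> 'I_m -> 'I_m -> bool) (rho : 'I_m -> nat -> R).
Hypothesis Hr0 : forall i, rho i 0%nat = 1.
Hypothesis Hr : forall i t, rho i (S t) = vsum (fun j : 'I_m => W E t i j * rho j t).

Lemma rho_ge0 t i : 0 <= rho i t.
Proof.
elim: t i => [|t IH] i; first by rewrite Hr0; lra.
rewrite Hr /vsum; apply: bsum_ge0 => j _; apply: Rmult_le_pos; [exact: W_ge0| exact: IH].
Qed.

Lemma rho_step t i j : W E t i j * rho j t <= rho i t.+1.
Proof.
rewrite Hr /vsum; apply: (@bsum_term _ (fun j => W E t i j * rho j t) j) => k.
apply: Rmult_le_pos; [exact: W_ge0| exact: rho_ge0].
Qed.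

Lemma rho_in t i j : j \in in_nbrs E t i -> / INR m * rho j t <= rho i t.+1.
Proof.
move=> H; apply: Rle_trans (rho_step t i j).
apply: Rmult_le_compat_r; [exact: rho_ge0| exact: W_lb].
Qed.

Lemma rho_self t i : / INR m * rho i t <= rho i t.+1.
Proof. apply: rho_in; by rewrite /in_nbrs inE eqxx orbT. Qed.

Lemma rho_edge t i j : E t j i -> / INR m * rho j t <= rho i t.+1.
Proof. move=> H; apply: rho_in; by rewrite /in_nbrs inE H. Qed.

Lemma rho_iter t r i : (/ INR m) ^ r * rho i t <= rho i (t + r)%nat.
Proof.
elim: r => [|r IH]; first by rewrite addn0 /=; lra.
rewrite addnS /=; apply: Rle_trans (rho_self _ _).
rewrite Rmult_assoc; apply: Rmult_le_compat_l => //.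
apply: Rlt_le; apply: Rinv_0_lt_compat.
apply: lt_0_INR; apply/ltP; have := ltn_ord i; lia.
Qed.

Lemma rho_sum t : \big[Rplus/0]_(i : 'I_m) rho i t = INR m.
Proof.
elim: t => [|t IH].
  rewrite (eq_bigr (fun _ => 1)); last by move=> i _; rewrite Hr0.
  rewrite bsum_const; ring.
rewrite (eq_bigr (fun i => \big[Rplus/0]_(j : 'I_m) (W E t i j * rho j t))); last by move=> i _; rewrite Hr.
rewrite exchange_big /= -IH; apply: eq_bigr => j _.
rewrite (eq_bigr (fun i => rho j t * W E t i j)); last by move=> i _; rewrite Rmult_comm.
by rewrite bsum_scale W_colsum Rmult_1_r.
Qed.

Lemma rho_big t (i0 : 'I_m) : exists j, 1 <= rho j t.
Proof.
have [j Hj] : exists j, forall i, rho i t <= rho j t.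
  exact: fin_argmax.
exists j.
have H1 : INR m <= INR m * rho j t.
  have := @bsum_le _ (index_enum 'I_m) xpredT (fun i => rho i t) (fun _ => rho j t) (fun i _ => Hj i).
  by rewrite rho_sum bsum_const.
have Hm : 0 < INR m by apply: lt_0_INR; apply/ltP; have := ltn_ord i0; lia.
nra.
Qed.

Variable (B : nat).
Hypothesis Hconn : forall k, strongly_connected (window_rel E B k).

Lemma c0_pos (j : 'I_m) : 0 < / INR m.
Proof. apply: Rinv_0_lt_compat; apply: lt_0_INR; apply/ltP; have := ltn_ord j; lia. Qed.

Lemma window (k : nat) (j : 'I_m) (l : nat) : exists S : {set 'I_m},
  [/\ j \in S, (forall i, i \in S) \/ (l < #|S|)%nat &
   forall i, i \in S -> (/ INR m) ^ (l * B) * rho j (k * B) <= rho i ((k + l) * B)%nat].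
Proof.
have c0p := c0_pos j.
elim: l => [|l [S [Hj Hd Hb]]].
  exists [set j]; split; first by rewrite set11.
    by right; rewrite cards1.
  move=> i /set1P ->; rewrite mul0n addn0 /=; lra.
set T := ((k + l) * B)%nat.
have ET : ((k + l.+1) * B = T + B)%nat by rewrite /T; lia.
have HS : forall i, i \in S -> (/ INR m) ^ (l.+1 * B) * rho j (k * B) <= rho i ((k + l.+1) * B)%nat.
  move=> i Hi; rewrite ET; apply: Rle_trans (rho_iter _ _ _).
  rewrite mulSn pow_add Rmult_assoc; apply: Rmult_le_compat_l; first by apply: pow_le; lra.
  exact: Hb.
case: (boolP [exists c, c \notin S]).
  move=> /existsP [c Hc].
  have [a' [c' [Ha' Hc' Hr']]] := cut_edge (Hconn (k + l) j c) Hj Hc.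
  move: Hr' => /existsP [l' Hl'].
  exists (c' |: S); split; first by rewrite setU1r.
    right; rewrite cardsU1 Hc'; case: Hd => [Hall|Hl]; last by move: Hl; rewrite /=; lia.
    by move: Hc'; rewrite Hall.
  move=> i /setU1P [->|Hi]; last exact: HS.
  have Hl'B := ltn_ord l'.
  have E1 : ((k + l.+1) * B = (T + l').+1 + (B - l'.+1))%nat by rewrite ET; lia.
  rewrite E1; apply: Rle_trans (rho_iter _ _ _).
  have H1 := rho_edge Hl'.
  have H2 := rho_iter T l' a'.
  have H3 := Hb a' Ha'.
  have Ep : ((/ INR m) ^ (l.+1 * B) = (/ INR m) ^ (B - l'.+1) * (/ INR m * ((/ INR m) ^ l' * (/ INR m) ^ (l * B))))%R.
    have -> : (l.+1 * B = (B - l'.+1) + (1 + (l' + l * B)))%nat by rewrite mulSn; lia.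
    by rewrite !pow_add pow_1.
  rewrite Ep !Rmult_assoc; apply: Rmult_le_compat_l; first by apply: pow_le; lra.
  apply: Rle_trans H1; apply: Rmult_le_compat_l; first lra.
  apply: Rle_trans H2; apply: Rmult_le_compat_l; first by apply: pow_le; lra.
  exact: H3.
move=> /existsPn Hall; exists S; split => //; first by left => i; have := Hall i; rewrite negbK.
Qed.

Lemma rho_lb (j0 : 'I_m) : (0 < B)%nat -> forall t i, (/ INR m) ^ (m * B) <= rho i t.
Proof.
move=> HB t i; have c0p := c0_pos j0.
have c01 : / INR m <= 1.
  rewrite -Rinv_1; apply: Rinv_le_contravar; first lra.
  have -> : 1 = INR 1 by []. apply: le_INR; apply/leP; have := ltn_ord j0; lia.
have powdec : forall a b, (a <= b)%nat -> (/ INR m) ^ b <= (/ INR m) ^ a.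
  move=> a b Hab; apply: pow_dec Hab; lra.
case: (ltnP t ((m.-1) * B)) => Ht.
  have := rho_iter 0 t i; rewrite Hr0 add0n Rmult_1_r => H.
  apply: Rle_trans H; apply: powdec; have := ltn_ord j0; nia.
set q := (t %/ B)%nat; set r := (t %% B)%nat.
have Et : t = (q * B + r)%nat by rewrite /q /r -divn_eq.
have Hr' : (r < B)%nat by rewrite /r ltn_mod.
have Hq : (m.-1 <= q)%nat.
  rewrite /q leq_divRL //.
set k := (q - m.-1)%nat.
have [j Hj] := rho_big (k * B) j0.
have [S [_ Hd Hb]] := window k j (m.-1).
have Hall : forall i, i \in S.
  case: Hd => [//|Hl].
  have /eqP -> : S == setT.
    rewrite eqEcard subsetT cardsT card_ord; have := ltn_ord j0; lia.
  by move=> i'; rewrite inE.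
have Ek : ((k + m.-1) * B = q * B)%nat by rewrite /k subnK.
have := Hb i (Hall i); rewrite Ek => H1.
have := rho_iter (q * B) r i; rewrite -Et => H2.
apply: Rle_trans H2.
have -> : (m * B = r + (m.-1 * B + (B - r)))%nat by have := ltn_ord j0; nia.
rewrite !pow_add.
have a0 : 0 <= (/ INR m) ^ r by apply: pow_le; lra.
have b0 : 0 <= (/ INR m) ^ (m.-1 * B) by apply: pow_le; lra.
have d0 : 0 <= (/ INR m) ^ (B - r) by apply: pow_le; lra.
have d1 : (/ INR m) ^ (B - r) <= 1 by rewrite -(pow_O (/ INR m)); apply: powdec.
apply: Rmult_le_compat_l => //.
have : (/ INR m) ^ (m.-1 * B) <= (/ INR m) ^ (m.-1 * B) * rho j (k * B) by nra.
nra.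
Qed.
End Rho.
Lemma coord_le_norm (n : nat) (v : vec n) c : Rabs (v c) <= vnorm v.
Proof.
rewrite -sqrt_Rsqr_abs /vnorm /dot /vsum; apply: sqrt_le_1_alt.
rewrite /Rsqr; apply: (@bsum_term _ (fun k => v k * v k) c) => k; nra.
Qed.

Definition l1 (n : nat) (y : vec n) := vsum (fun c => Rabs (y c)).

Lemma compact_bound (n : nat) (X : vec n -> Prop) :
  compact_set X -> exists K, forall y, X y -> l1 y <= K.
Proof.
move=> HX.
have [||l Hl] := HX nat (fun k y => l1 y < INR k).
- move=> k y /= Hy; set s := l1 y; have {}Hy : s < INR k by exact: Hy.
  have Hn : 0 < INR n + 1 by have := pos_INR n; lra.
  exists ((INR k - s) / (INR n + 1)); split.
    apply: Rdiv_lt_0_compat => //; lra.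
  move=> z Hz.
  have H1 : l1 z <= vsum (fun c => Rabs (y c) + (INR k - s) / (INR n + 1)).
    apply: bsum_le => c _.
    have Hc := coord_le_norm (vsub z y) c; rewrite {1}/vsub in Hc.
    have := Rabs_triang_inv (z c) (y c); lra.
  move: H1; rewrite /vsum big_split /= bsum_const -/(vsum _) -/(l1 y) -/s => H1.
  have : INR n * ((INR k - s) / (INR n + 1)) < INR k - s.
    have -> : INR n * ((INR k - s) / (INR n + 1)) = (INR k - s) - (INR k - s) / (INR n + 1) by field; lra.
    have : 0 < (INR k - s) / (INR n + 1) by apply: Rdiv_lt_0_compat => //; lra.
    lra.
  lra.
- move=> y _; have [k Hk] := INR_unbounded (l1 y); by exists k.
have [C HC] := list_bound l.
exists C => y Hy; have [i [Hi Hyi]] := Hl y Hy; have := HC i Hi; lra.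
Qed.
Lemma fin_ex_bound (T : finType) (P : T -> R -> Prop) :
  (forall i C C', C <= C' -> P i C -> P i C') ->
  (forall i, exists C, P i C) -> exists C, forall i, P i C.
Proof.
move=> Hmon Hex.
suff [C HC] : exists C, forall i, i \in enum T -> P i C.
  by exists C => i; apply: HC; rewrite mem_enum.
elim: (enum T) => [|a s [C HC]]; first by exists 0.
have [Ca Ha] := Hex a.
exists (Rmax C Ca) => i; rewrite in_cons => /orP [/eqP ->|Hi].
  exact: Hmon (Rmax_r _ _) Ha.
apply: Hmon (Rmax_l _ _) _; exact: HC.
Qed.

Theorem theorem1
  (m p : nat) (n : 'I_m -> nat)
  (f : forall i : 'I_m, vec (n i) -> R)
  (X : forall i : 'I_m, vec (n i) -> Prop)
  (A : forall i : 'I_m, 'I_p -> 'I_(n i) -> R)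
  (b : 'I_m -> vec p)
  (gamma tau : 'I_m -> R)
  (E : nat -> 'I_m -> 'I_m -> bool) (B : nat)
  (beta : nat -> R)
  (theta u lam : 'I_m -> nat -> vec p) (rho : 'I_m -> nat -> R)
  (x : forall i : 'I_m, nat -> vec (n i)) :
  (* regularization parameters *)
  (forall i, 0 < gamma i) ->
  (* Assumption A1 *)
  (forall i, 0 < tau i) ->
  (forall i, strongly_convex (tau i) (f i)) ->
  (forall i, nonempty_set (X i) /\ convex_set (X i) /\ compact_set (X i)) ->
  (* Assumption A2 *)
  (0 < B)%nat ->
  (forall k : nat, strongly_connected (window_rel E B k)) ->
  (* stepsizes *)
  (forall t : nat, (0 < t)%nat -> 0 < beta t) ->
  (forall t : nat, (0 < t)%nat -> beta (S t) <= beta t) ->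
  Un_cv beta 0 ->
  (* Algorithm DRDGA (theta_i[0] arbitrary) *)
  (forall i, rho i 0%nat = 1) ->
  (forall i t k, u i (S t) k = vsum (fun j : 'I_m => W E t i j * theta j t k)) ->
  (forall i t, rho i (S t) = vsum (fun j : 'I_m => W E t i j * rho j t)) ->
  (forall i t k, lam i (S t) k = u i (S t) k / rho i (S t)) ->
  (forall i t, is_argmin (X i)
      (fun y => lagr (f i) (A i) (b i) (gamma i) y (lam i (S t))) (x i (S t))) ->
  (forall i t k, theta i (S t) k =
      u i (S t) k + beta (S t) * (matvec (A i) (x i (S t)) k - b i k
                                  - gamma i * lam i (S t) k)) ->
  exists D : R, 0 < D /\
    forall (i : 'I_m) (t : nat), (0 < t)%nat -> vnorm (lam i t) <= D.
Proof.
move=> Hgam _ _ HX HB Hconn Hbeta _ Hcv Hr0 Hu Hr Hlam Hx Htheta.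
case: (ltnP 0 m) => Hm; last first.
  exists 1; split; first lra.
  move=> i; have := ltn_ord i; lia.
pose j0 := Ordinal Hm.
set c := (/ INR m) ^ (m * B).
have Hc : forall t i, c <= rho i t := rho_lb Hr0 Hr Hconn j0 HB.
have c0 : 0 < c by apply: pow_lt; exact: c0_pos j0.
have [G HG] : exists G, forall i t k,
    Rabs (matvec (A i) (x i (S t)) k - b i k) <= G.
  apply: (fin_ex_bound (P := fun i G => forall t k, Rabs (matvec (A i) (x i (S t)) k - b i k) <= G)).
    move=> i C C' HCC' H t k; apply: Rle_trans (H t k) HCC'.
  move=> i.
  have [_ [_ Hcomp]] := HX i.
  have [K HK] := compact_bound Hcomp.
  have [Am [Am0 HAm]] := fin_bound (fun kc : 'I_p * 'I_(n i) => Rabs (A i kc.1 kc.2)).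
  have [bm [bm0 Hbm]] := fin_bound (fun k => Rabs (b i k)).
  exists (Am * K + bm) => t k.
  have Hxi := HK _ (proj1 (Hx i t)).
  apply: Rle_trans (Rabs_triang _ _) _; rewrite Rabs_Ropp.
  have := Hbm k; have : Rabs (matvec (A i) (x i t.+1) k) <= Am * K; last lra.
  rewrite /matvec; apply: Rle_trans (bsum_abs _ _ _) _.
  apply: Rle_trans (_ : vsum (fun c => Am * Rabs (x i t.+1 c)) <= _).
    apply: bsum_le => cc _; rewrite Rabs_mult; apply: Rmult_le_compat_r; first exact: Rabs_pos.
    exact: (HAm (k, cc)).
  rewrite /vsum bsum_scale; apply: Rmult_le_compat_l => //.
have [Gm0 [Gm00 HGm]] := fin_bound gamma.
set Gm := Gm0 + 1.
have Gmp : 0 < Gm by rewrite /Gm; lra.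
have HGam : forall j, gamma j <= Gm by move=> j; have := HGm j; rewrite /Gm; lra.
have [MG [MG0 HMG]] := fin_bound (fun j => G / gamma j).
have HMGg : forall j, G <= MG * gamma j.
  move=> j; have := HMG j; have := Hgam j => g0 H.
  have -> : G = G / gamma j * gamma j by field; lra.
  apply: Rmult_le_compat_r => //; lra.
have [N HN] := Hcv (c / Gm) (Rdiv_lt_0_compat _ _ c0 Gmp).
set T0 := N.+1.
have HbT : forall t, (T0 <= t)%nat -> 0 < beta t /\ beta t < c / Gm.
  move=> t Ht; split; first by apply: Hbeta; rewrite /T0 in Ht; lia.
  have := HN t; rewrite /R_dist Rminus_0_r => H.
  have := H (ltac:(rewrite /T0 in Ht; apply/leP; lia)).
  move=> H'; apply: Rle_lt_trans H'; exact: Rle_abs.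
have [M0 [M00 HM0]] := nat_bound T0
   (P := fun t C => forall i k, Rabs (lam i t k) <= C)
   (fun t C C' HCC' H i k => Rle_trans _ _ _ (H i k) HCC')
   (fun t => let: ex_intro C (conj _ HC) := fin_bound (fun ik : 'I_m * 'I_p => Rabs (lam ik.1 t ik.2))
             in ex_intro _ C (fun i k => HC (i, k))).
set M := Rmax M0 MG.
have M00' : 0 <= M by apply: Rle_trans M00 (Rmax_l _ _).
have HMG' : forall j, G <= M * gamma j.
  move=> j; apply: Rle_trans (HMGg j) _; apply: Rmult_le_compat_r; first by have := Hgam j; lra.
  exact: Rmax_r.
have Hrp : forall j t, 0 < rho j t by move=> j t; have := Hc t j; lra.
have HM : forall t i k, Rabs (lam i t k) <= M.
  move=> t; case: (leqP t T0) => Ht.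
    move=> i k; apply: Rle_trans (HM0 t Ht i k) (Rmax_l _ _).
  have -> : t = (T0 + (t - T0))%nat by lia.
  elim: (t - T0)%nat => [|d IH] i k.
    rewrite addn0; apply: Rle_trans (HM0 T0 (leqnn _) i k) (Rmax_l _ _).
  set s' := (N + d)%nat.
  have Et : (T0 + d.+1 = s'.+2)%nat by rewrite /T0 /s'; lia.
  have Et' : (T0 + d = s'.+1)%nat by rewrite /T0 /s'; lia.
  rewrite Et; rewrite Et' in IH.
  have [bp bl] := HbT s'.+1 (ltac:(rewrite /T0 /s'; lia)).
  have Hbg : forall j, beta s'.+1 * gamma j <= rho j s'.+1.
    move=> j; have := Hc s'.+1 j; have := HGam j; have := Hgam j => g0 g1 hc.
    have Ec : c / Gm * Gm = c by field; lra.
    nra.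
  have Hu' : forall j k, u j s'.+1 k = rho j s'.+1 * lam j s'.+1 k.
    move=> j kk; rewrite Hlam; field; have := Hrp j s'.+1; lra.
  have Hth : forall j, Rabs (theta j s'.+1 k) <= M * rho j s'.+1.
    move=> j; rewrite Htheta Hu'.
    set g := matvec (A j) (x j s'.+1) k - b j k.
    set l := lam j s'.+1 k.
    have Eq : rho j s'.+1 * l + beta s'.+1 * (g - gamma j * l) = l * (rho j s'.+1 - beta s'.+1 * gamma j) + beta s'.+1 * g by ring.
    rewrite Eq; apply: Rle_trans (Rabs_triang _ _) _.
    rewrite !Rabs_mult (Rabs_pos_eq (rho j s'.+1 - _)); last by have := Hbg j; lra.
    rewrite (Rabs_pos_eq (beta _)); last lra.
    have H1 : Rabs l <= M by exact: IH.
    have H2 : Rabs g <= G by exact: HG.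
    have H3 := HMG' j; have H4 := Hbg j; have H5 := Rabs_pos l; have H6 := Rabs_pos g.
    have : Rabs l * (rho j s'.+1 - beta s'.+1 * gamma j) <= M * (rho j s'.+1 - beta s'.+1 * gamma j).
      apply: Rmult_le_compat_r => //; lra.
    have : beta s'.+1 * Rabs g <= beta s'.+1 * (M * gamma j).
      apply: Rmult_le_compat_l; lra.
    nra.
  have Hu2 : Rabs (u i s'.+2 k) <= M * rho i s'.+2.
    rewrite Hu Hr /vsum; apply: Rle_trans (bsum_abs _ _ _) _.
    rewrite -bsum_scale; apply: bsum_le => j _.
    rewrite Rabs_mult (Rabs_pos_eq (W _ _ _ _)); last exact: W_ge0.
    have := Hth j; have := W_ge0 E s'.+1 i j => w0 h.
    have : W E s'.+1 i j * Rabs (theta j s'.+1 k) <= W E s'.+1 i j * (M * rho j s'.+1).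
      exact: Rmult_le_compat_l.
    lra.
  rewrite Hlam /Rdiv Rabs_mult Rabs_inv (Rabs_pos_eq (rho i _)); last by have := Hrp i s'.+2; lra.
  have hp := Hrp i s'.+2.
  apply: (Rmult_le_reg_r (rho i s'.+2)) => //.
  rewrite Rmult_assoc Rinv_l; last lra.
  lra.
exists (sqrt (INR p * (M * M)) + 1); split.
  have := sqrt_pos (INR p * (M * M)); lra.
move=> i t _.
have : vnorm (lam i t) <= sqrt (INR p * (M * M)); last lra.
rewrite /vnorm /dot; apply: sqrt_le_1_alt.
rewrite -bsum_const; apply: bsum_le => k _.
have M0' : 0 <= M by apply: Rle_trans M00 (Rmax_l _ _).
have H1 := HM t i k; have H2 := Rabs_pos (lam i t k).
have E1 := Rsqr_abs (lam i t k); rewrite /Rsqr in E1.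
rewrite E1; apply: Rmult_le_compat => //.
Qed.
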